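(* For every prime power $k$, the graph $G_k$ satisfies $c(G_k) = k$, $c_{V,\mathrm{r}}(G_k) \leq k+1$ and $c_E(G_k) \geq k(k-1)$.
   Context: A Latin square of order $k$ is a partition $L = L(1) \cup \dots \cup L(k)$ of $A = [k]\times[k]$ such that each row $A[i,\cdot] = \{(i,j) : j \in [k]\}$ and each column meets each part $L(n)$ in exactly one position. Two Latin squares $L_1, L_2$ of order $k$ are orthogonal if $|L_1(n_1)\cap L_2(n_2)| = 1$ for all $n_1,n_2\in[k]$. For a prime power $k$, fix $k-1$ mutually orthogonal Latin squares $L_1,\dots,L_{k-1}$ of order $k$. Let $R = \{A[i,\cdot] : i \in [k]\}$ and $\mathcal{L} = \{L_s(n) : s \in [k-1], n \in [k]\}$. The graph $G_k$ has vertex set $A \cup R \cup \mathcal{L}$ and an edge between $p \in A$ and $S \in R \cup \mathcal{L}$ whenever $p \in S$; no other edges. Games: players alternate turns, cops first; initially the cop player places all cops, then the robber is placed on a vertex (several pieces may share a position). In a turn each piece of the moving player may stay or make one move (no obligation to move). The robber sits on vertices and moves to adjacent vertices; $v_r$ is his current vertex. Classical version: cops on vertices moving to adjacent vertices; cops win if a cop is on $v_r$; $c(G)$ is the least number of cops forcing a win in finitely many turns. Restrictive vertex version: cops on vertices; cops win when every neighbor of $v_r$ is occupied by a cop; after each robber turn (including initial placement) no cop may be on $v_r$, in particular the robber may not move onto a cop-occupied vertex, and if a cop moves onto $v_r$ the robber must leave in his next turn; number $c_{V,\mathrm{r}}(G)$. Edge version: cops sit on edges; a cop on edge $e$ may move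 to any edge sharing an endpoint with $e$; cops win when every edge incident to $v_r$ is occupied by a cop; number $c_E(G)$. *)

(* Defs.v *)
From mathcomp Require Import all_boot.
Set Implicit Arguments.
Unset Strict Implicit.
Unset Printing Implicit Defensive.

(* Game positions where the cops are about to move: cop configuration C (m
   pieces, each in positions of type P) and robber vertex r.
   cops_force C r  <->  the cops can force a win in finitely many turns
   from this position (inductive = well-founded game tree). *)
Inductive cops_force (T P : Type) (m : nat)
  (cmove : P -> P -> Prop)
  (rmove : ('I_m -> P) -> T -> T -> Prop)     (* legal robber move, given the
                                                 cops' (new) configuration *)
  (won : ('I_m -> P) -> T -> Prop)
  : ('I_m -> P) -> T -> Prop :=
| force_now C r : won C r -> cops_force cmove rmove won C r
| force_step C r (C' : 'I_m -> P) :
    (forall i, cmove (C i) (C' i)) ->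
    (won C' r \/ forall r', rmove C' r r' -> cops_force cmove rmove won C' r') ->
    cops_force cmove rmove won C r.

Definition cops_win (T P : Type) (m : nat) (cvalid : P -> Prop)
  (cmove : P -> P -> Prop) (rplace : ('I_m -> P) -> T -> Prop)
  (rmove : ('I_m -> P) -> T -> T -> Prop) (won : ('I_m -> P) -> T -> Prop) :=
  exists C0 : 'I_m -> P, (forall i, cvalid (C0 i)) /\
    forall r0, rplace C0 r0 -> cops_force cmove rmove won C0 r0.

Definition classical_win (T : finType) (e : rel T) (m : nat) : Prop :=
  @cops_win T T m (fun _ => True) (fun x y => y = x \/ e x y)
    (fun _ _ => True) (fun _ r r' => r' = r \/ e r r')
    (fun C r => exists i, C i = r).

Definition restrictive_win (T : finType) (e : rel T) (m : nat) : Prop :=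
  @cops_win T T m (fun _ => True) (fun x y => y = x \/ e x y)
    (fun C r => forall i, C i <> r)
    (fun C r r' => (r' = r \/ e r r') /\ forall i, C i <> r')
    (fun C r => forall y, e r y -> exists i, C i = y).

Definition is_edge (T : finType) (e : rel T) (E : {set T}) : Prop :=
  exists x y, e x y /\ E = [set x; y].

Definition edge_win (T : finType) (e : rel T) (m : nat) : Prop :=
  @cops_win T {set T} m (is_edge e)
    (fun E E' => E' = E \/ (is_edge e E' /\ exists x, x \in E /\ x \in E'))
    (fun _ _ => True) (fun _ r r' => r' = r \/ e r r')
    (fun C r => forall y, e r y -> exists i, C i = [set r; y]).

Definition copnum_eq (win : nat -> Prop) (n : nat) : Prop :=
  win n /\ forall m, m < n -> ~ win m.
Definition copnum_le (win : nat -> Prop) (n : nat) : Prop :=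
  exists m, m <= n /\ win m.
Definition copnum_ge (win : nat -> Prop) (n : nat) : Prop :=
  forall m, m < n -> ~ win m.

Definition prime_power (k : nat) : Prop :=
  exists p n, prime p /\ 0 < n /\ k = p ^ n.

(* A Latin square of order k is given by the labelling L : [k]x[k] -> [k];
   its part L(n) is the set of cells labelled n. *)
Definition part (k : nat) (L : 'I_k -> 'I_k -> 'I_k) (n : 'I_k) : {set 'I_k * 'I_k} :=
  [set p | L p.1 p.2 == n].

Definition latin (k : nat) (L : 'I_k -> 'I_k -> 'I_k) : Prop :=
  (forall i n, #|[set p in part L n | p.1 == i]| = 1) /\
  (forall j n, #|[set p in part L n | p.2 == j]| = 1).

Definition orthogonal (k : nat) (L1 L2 : 'I_k -> 'I_k -> 'I_k) : Prop :=
  forall n1 n2, #|part L1 n1 :&: part L2 n2| = 1.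

(* Vertices: A = [k]x[k], R (rows, indexed by i), and the parts L_s(n),
   indexed by (s, n) with s in [k-1], n in [k]. *)
Notation Gvert k := (('I_k * 'I_k) + ('I_k + ('I_k.-1 * 'I_k)))%type.

Definition incid (k : nat) (Ls : 'I_k.-1 -> 'I_k -> 'I_k -> 'I_k)
  (p : 'I_k * 'I_k) (X : 'I_k + ('I_k.-1 * 'I_k)) : bool :=
  match X with
  | inl i => p.1 == i
  | inr (s, n) => p \in part (Ls s) n
  end.

Definition Gadj (k : nat) (Ls : 'I_k.-1 -> 'I_k -> 'I_k -> 'I_k) : rel (Gvert k) :=
  fun v w =>
    match v, w with
    | inl p, inr X => incid Ls p X
    | inr X, inl p => incid Ls p X
    | _, _ => false
    end.

(* Main.v *)
Require Import Defs.
From mathcomp Require Import all_boot.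
Set Implicit Arguments.
Unset Strict Implicit.
Unset Printing Implicit Defensive.

Lemma no_force (T P : Type) (m : nat) (cmove : P -> P -> Prop)
  (rmove : ('I_m -> P) -> T -> T -> Prop) (won : ('I_m -> P) -> T -> Prop)
  (Inv : ('I_m -> P) -> T -> Prop) :
  (forall C r, Inv C r -> ~ won C r) ->
  (forall C r C', Inv C r -> (forall i, cmove (C i) (C' i)) ->
     ~ won C' r /\ exists r', rmove C' r r' /\ Inv C' r') ->
  forall C r, cops_force cmove rmove won C r -> Inv C r -> False.
Proof.
move=> H1 H2; fix IH 3 => C r [C0 r0 Hw | C0 r0 C' Hm [Hw|Hall]] HI.
- exact: H1 HI Hw.
- by case: (H2 _ _ _ HI Hm).
- have [_ [r' [Hr HI']]] := H2 _ _ _ HI Hm.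
  exact: IH _ _ (Hall r' Hr) HI'.
Qed.

Lemma pred_gt0 n : 1 < n -> 0 < n.-1.
Proof. by case: n => [|[|n]]. Qed.

Section G.
Variable k : nat.
Variable Ls : 'I_k.-1 -> 'I_k -> 'I_k -> 'I_k.
Hypothesis Hlat : forall s, latin (Ls s).
Hypothesis Horth : forall s t, s != t -> orthogonal (Ls s) (Ls t).
Hypothesis Hk : 1 < k.

Notation V := (Gvert k).
Notation e := (Gadj Ls).

Lemma adjC x y : e x y = e y x.
Proof. by case: x y => [p|[i|[s n]]] [q|[j|[t m]]]. Qed.

Lemma adj_irr x : e x x = false.
Proof. by case: x => [p|[i|[s n]]]. Qed.

Definition side (x : V) := if x is inl _ then false else true.
Lemma adj_side x y : e x y -> side y = ~~ side x.
Proof. by case: x y => [?|?] [?|?]. Qed.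

Lemma latin_uniq (L : 'I_k -> 'I_k -> 'I_k) : latin L -> forall n p q, p \in part L n -> q \in part L n -> p.1 = q.1 -> p = q.
Proof.
move=> [H _] n p q Hp Hq E.
have /eqP/cards1P [x Hx] := H p.1 n.
have Hp' : p \in [set p0 in part L n | p0.1 == p.1] by rewrite inE Hp eqxx.
have Hq' : q \in [set p0 in part L n | p0.1 == p.1] by rewrite inE Hq E eqxx.
by move: Hp' Hq'; rewrite Hx !inE => /eqP -> /eqP ->.
Qed.

Definition pt (L : 'I_k -> 'I_k -> 'I_k) n (i : 'I_k) : 'I_k * 'I_k := odflt (i,i) [pick p in [set p in part L n | p.1 == i]].

Lemma pt_spec (L : 'I_k -> 'I_k -> 'I_k) n i : latin L -> pt L n i \in part L n /\ (pt L n i).1 = i.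
Proof.
move=> [H _]; rewrite /pt; case: pickP => [p|] /=.
  by rewrite inE => /andP [? /eqP].
move=> H0; have := H i n; rewrite (eq_card0 H0) //.
Qed.

Lemma pt_uniq (L : 'I_k -> 'I_k -> 'I_k) n q : latin L -> q \in part L n -> pt L n q.1 = q.
Proof.
move=> HL Hq; have [H1 H2] := pt_spec n q.1 HL.
exact: (latin_uniq HL H1 Hq H2).
Qed.

Lemma noC4_pl p q X Y : p != q -> X != Y -> incid Ls p X -> incid Ls q X ->
  incid Ls p Y -> incid Ls q Y -> False.
Proof.
move=> Hpq HXY.
case: X Y HXY => [i|[s n]] [j|[t m]] /= HXY.
- by move=> /eqP Hi _ /eqP Hj; move: HXY; rewrite -Hi -Hj eqxx.
- move=> /eqP Hp /eqP Hq Hpp Hqq.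
  by move: Hpq; rewrite (latin_uniq (Hlat t) Hpp Hqq) ?eqxx // Hp Hq.
- move=> Hpp Hqq /eqP Hp /eqP Hq.
  by move: Hpq; rewrite (latin_uniq (Hlat s) Hpp Hqq) ?eqxx // Hp Hq.
- case: (eqVneq s t) HXY => [<-|Hst] HXY.
    rewrite !inE => /eqP Hn _ /eqP Hm _.
    by move: HXY; rewrite -Hn -Hm eqxx.

  move=> Hp1 Hq1 Hp2 Hq2.
  have /eqP/cards1P [x Hx] := Horth Hst n m.
  have : p \in part (Ls s) n :&: part (Ls t) m by rewrite inE Hp1 Hp2.
  have : q \in part (Ls s) n :&: part (Ls t) m by rewrite inE Hq1 Hq2.
  by rewrite Hx !inE => /eqP Eq /eqP Ep; move: Hpq; rewrite Ep Eq eqxx.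
Qed.

Lemma noC4 a b c d : a != b -> e a c -> e b c -> e a d -> e b d -> c = d.
Proof.
move=> Hab Hac Hbc Had Hbd; case: (eqVneq c d) => // Hcd; exfalso.
move: Hab Hac Hbc Had Hbd Hcd.
case: a b c d => [p|X] [q|Y] [c|c] [d|d] //= Hab Hac Hbc Had Hbd Hcd.
- exact: (noC4_pl Hab Hcd Hac Hbc Had Hbd).
- exact: (noC4_pl Hcd Hab Hac Had Hbc Hbd).
Qed.

Lemma deg_of (T : finType) (f : T -> V) v : injective f -> (forall x, e v (f x)) ->
  #|T| <= #|[set y | e v y]|.
Proof.
move=> injf Hf; rewrite -cardsT -(card_imset _ injf).
apply: subset_leq_card; apply/subsetP => y /imsetP [x _ ->]; by rewrite inE.
Qed.

Lemma deg v : k <= #|[set y | e v y]|.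
Proof.
have k0 : 0 < k by apply: ltnW.
case: v => [p|[i|[s n]]].
- pose f (o : option 'I_k.-1) : V :=
    if o is Some s then inr (inr (s, Ls s p.1 p.2)) else inr (inl p.1).
  apply: (@leq_trans #|{: option 'I_k.-1}|); first by rewrite card_option card_ord prednK.
  apply: (deg_of (f := f)).
    by move=> [x|] [y|] //= [->].
  by move=> [x|] /=; rewrite ?inE eqxx.
- pose f (j : 'I_k) : V := inl (i, j).
  apply: (@leq_trans #|'I_k|); first by rewrite card_ord.
  apply: (deg_of (f := f)).
    by move=> x y [].
  by move=> x /=.
- pose f (i : 'I_k) : V := inl (pt (Ls s) n i).
  apply: (@leq_trans #|'I_k|); first by rewrite card_ord.
  apply: (deg_of (f := f)).
    move=> x y [] E.
    by rewrite -(pt_spec n x (Hlat s)).2 E (pt_spec n y (Hlat s)).2.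
  by move=> x /=; case: (pt_spec n x (Hlat s)).
Qed.


Lemma k0 : 0 < k. Proof. exact: ltnW. Qed.

Definition threat (x w : V) := (x == w) || e w x.

Lemma threat_uniq v x w1 w2 : x != v -> e v w1 -> e v w2 ->
  threat x w1 -> threat x w2 -> w1 = w2.
Proof.
move=> Hxv H1 H2; rewrite /threat.
case/orP => [/eqP E1|A1]; case/orP => [/eqP E2|A2].
- by rewrite -E1 -E2.
- rewrite E1 in A2; have := adj_side A2; rewrite (adj_side H1) (adj_side H2).
  by case: (side v).
- rewrite E2 in A1; have := adj_side A1; rewrite (adj_side H1) (adj_side H2).
  by case: (side v).
- apply: (noC4 (a := v) (b := x)) => //; first by rewrite eq_sym.
  by rewrite adjC.
  by rewrite adjC.
Qed.

Lemma escape m (C : 'I_m -> V) v : m < k -> (forall i, C i != v) ->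
  exists w, e v w /\ forall i, ~~ threat (C i) w.
Proof.
move=> Hm HC.
pose g i := odflt v [pick w | e v w && threat (C i) w].
have Hsub : [set w | e v w && [exists i, threat (C i) w]] \subset g @: setT.
  apply/subsetP => w; rewrite inE => /andP [Hw /existsP [i Hi]].
  apply/imsetP; exists i => //; rewrite /g; case: pickP => [w' /andP [Hw' Hi']|H0] /=.
    exact: threat_uniq (HC i) Hw Hw' Hi Hi'.
  by move: (H0 w); rewrite Hw Hi.
have Hcard : #|[set w | e v w && [exists i, threat (C i) w]]| < #|[set y | e v y]|.
  apply: leq_ltn_trans (subset_leq_card Hsub) _.
  apply: leq_ltn_trans (leq_imset_card g setT) _.
  rewrite cardsT card_ord; exact: leq_trans Hm (deg v).
have : ~~ ([set y | e v y] \subset [set w | e v w && [exists i, threat (C i) w]]).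
  by apply: contraL Hcard => /subset_leq_card; rewrite leqNgt.
case/subsetPn => w; rewrite !inE => Hw; rewrite Hw /= negb_exists => /forallP Hn.
by exists w.
Qed.

Lemma free_vertex m (C : 'I_m -> V) : m < k -> exists v, forall i, C i != v.
Proof.
move=> Hm.
have Hc : #|C @: setT| < #|[set: V]|.
  apply: leq_ltn_trans (leq_imset_card C setT) _.
  rewrite cardsT card_ord; apply: leq_trans Hm _.
  apply: leq_trans (deg (inr (inl (Ordinal k0)))) _.
  by rewrite cardsT; apply: max_card.
have : ~~ ([set: V] \subset C @: setT).
  by apply: contraL Hc => /subset_leq_card; rewrite leqNgt.
case/subsetPn => v _ Hv; exists v => i; apply: contraNneq Hv => <-.
by apply: imset_f.
Qed.

Lemma classical_lower m : m < k -> ~ classical_win e m.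
Proof.
move=> Hm [C0 [_ Hwin]].
have [v Hv] := free_vertex C0 Hm.
have [w [_ Hw]] := escape Hm Hv.
apply: (no_force (Inv := fun C r => forall i, ~~ threat (C i) r)) (Hwin w I) Hw.
- move=> C r HI [i Hi]; have := HI i; by rewrite /threat Hi eqxx.
- move=> C r C' HI Hmv.
  have HC' : forall i, C' i != r.
    move=> i; case: (Hmv i) => [->|Ha].
      by have := HI i; rewrite /threat negb_or => /andP [].
    apply/eqP => E; rewrite E in Ha; have := HI i.
    by rewrite /threat adjC Ha orbT.
  split; first by move=> [i Hi]; move: (HC' i); rewrite Hi eqxx.
  have [r' [Hr' Hr'2]] := escape Hm HC'.
  by exists r'; split => //; right.
Qed.

Lemma classical_upper : classical_win e k.
Proof.
exists (fun i => inr (inl i)); split => // r0 _.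
case: r0 => [p|[i|[s n]]].
- apply: (force_step (C' := fun i => if i == p.1 then inl p else inr (inl i))).
    move=> i /=; case: eqP => [->|_]; [right; by rewrite /= eqxx | by left].
  by left; exists p.1; rewrite eqxx.
- by apply: force_now; exists i.
- apply: (force_step (C' := fun i => inl (pt (Ls s) n i))).
    move=> i; right => /=; case: (pt_spec n i (Hlat s)) => _ ->; exact: eqxx.
  right => r' [->|Hr].
  + apply: (force_step (C' := fun _ => inr (inr (s,n)))).
      by move=> i; right => /=; case: (pt_spec n i (Hlat s)).
    by left; exists (Ordinal k0).
  + case: r' Hr => [q|[j|[t m]]] //= Hq.
    by apply: force_now; exists q.1; rewrite pt_uniq.
Qed.


Definition i0 : 'I_k := Ordinal k0.
Definition rowidx (j : 'I_k.+1) : 'I_k := insubd i0 (val j).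
Lemma rowidx_val (j : 'I_k.+1) : j < k -> val (rowidx j) = j.
Proof. by rewrite /rowidx val_insubd => ->. Qed.
Lemma rowidx_widen i : rowidx (widen_ord (leqnSn k) i) = i.
Proof. by apply: val_inj; rewrite rowidx_val //= ltn_ord. Qed.

Definition RowCops (C : 'I_k.+1 -> V) := forall j : 'I_k.+1, j < k -> C j = inr (inl (rowidx j)).

Notation RF := (@cops_force V V k.+1 (fun x y => y = x \/ e x y)
  (fun C r r' => (r' = r \/ e r r') /\ forall i, C i <> r')
  (fun C r => forall y, e r y -> exists i, C i = y)).

Lemma R1 C s n : RowCops C -> RF C (inr (inr (s,n))).
Proof.
move=> HR.
apply: (force_step (C' := fun j => if j < k then inl (pt (Ls s) n (rowidx j)) else C j)).
  move=> j; case: ifP => Hj; last by left.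
  by right; rewrite HR //=; case: (pt_spec n (rowidx j) (Hlat s)) => _ ->.
left => y; case: y => [q|[?|[? ?]]] //= Hq.
exists (widen_ord (leqnSn k) q.1); rewrite /= ltn_ord rowidx_widen.
by rewrite pt_uniq.
Qed.

Fixpoint reach d (E : V) p : Prop :=
  if d is d'.+1 then exists E', e E E' /\ reach d' E' p else e E (inl p).

Lemma R2 p d : forall C, RowCops C -> reach d (C ord_max) p -> RF C (inl p).
Proof.
elim: d => [|d IH] C HR Hr.
- pose C' j := if j == ord_max then inl p else C j.
  apply: (force_step (C' := C')).
    by move=> j; rewrite /C'; case: eqP => [->|_]; [right | left].
  right => r' [Hm Hno].
  have HR' : RowCops C'.
    move=> j Hj; have jne : j != ord_max by apply: contraTneq Hj => ->; rewrite ltnn.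
    by rewrite /C' (negbTE jne); apply: HR.
  case: Hm => [E|Ha].
    by exfalso; apply: (Hno ord_max); rewrite /C' eqxx E.
  case: r' Ha Hno => [q|[i|[s n]]] //= Ha Hno; last exact: R1.
  exfalso; apply: (Hno (widen_ord (leqnSn k) i)).
  by rewrite HR' /= ?ltn_ord // rowidx_widen.
- case: Hr => [E' [HE' Hr]].
  pose C' j := if j == ord_max then E' else C j.
  apply: (force_step (C' := C')).
    by move=> j; rewrite /C'; case: eqP => [->|_]; [right | left].
  right => r' [Hm Hno].
  have HR' : RowCops C'.
    move=> j Hj; have jne : j != ord_max by apply: contraTneq Hj => ->; rewrite ltnn.
    by rewrite /C' (negbTE jne); apply: HR.
  case: Hm => [->|Ha].
    by apply: IH => //; rewrite /C' eqxx.
  case: r' Ha Hno => [q|[i|[s n]]] //= Ha Hno; last exact: R1.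
  exfalso; apply: (Hno (widen_ord (leqnSn k) i)).
  by rewrite HR' /= ?ltn_ord // rowidx_widen.
Qed.

Lemma restrictive_upper : restrictive_win e k.+1.
Proof.
exists (fun j => inr (inl (rowidx j))); split => // r0 Hr0.
have HR0 : RowCops (fun j => inr (inl (rowidx j))) by [].
case: r0 Hr0 => [p|[i|[s n]]] Hr0; last exact: R1.
- apply: (R2 (d := 2)) HR0 _ => /=.
  set u := rowidx ord_max.
  set s0 : 'I_k.-1 := Ordinal (pred_gt0 Hk).
  set q0 := pt (Ls s0) (Ls s0 p.1 p.2) u.
  have [Hq1 Hq2] := pt_spec (Ls s0 p.1 p.2) u (Hlat s0).
  exists (inl q0); split; first by rewrite /= -/q0 Hq2.
  exists (inr (inr (s0, Ls s0 p.1 p.2))); split => //=.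
  by rewrite inE.
- by exfalso; apply: (Hr0 (widen_ord (leqnSn k) i)); rewrite rowidx_widen.
Qed.

Definition inS (v y w : V) := (y == w) || (e w y && (y != v)).
Definition touch (E : {set V}) (w v : V) : bool := [exists y in E, inS v y w].

Lemma inS_same v y w1 w2 : e v w1 -> e v w2 -> inS v y w1 -> inS v y w2 -> w1 = w2.
Proof.
move=> H1 H2 S1 S2.
have Hyv : y != v.
  move: S1; rewrite /inS => /orP [/eqP ->|/andP [_ //]].
  by apply/eqP => E; rewrite E adj_irr in H1.
apply: (threat_uniq Hyv H1 H2).
  by move: S1; rewrite /inS /threat => /orP [->//|/andP [-> _]]; rewrite orbT.
by move: S2; rewrite /inS /threat => /orP [->//|/andP [-> _]]; rewrite orbT.
Qed.

Lemma inS_adj v y1 y2 w1 w2 : e v w1 -> e v w2 -> e y1 y2 ->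
  inS v y1 w1 -> inS v y2 w2 -> w1 = w2.
Proof.
move=> H1 H2 H12; rewrite /inS.
case/orP => [/eqP E1|/andP [A1 N1]]; case/orP => [/eqP E2|/andP [A2 N2]].
- rewrite E1 E2 in H12; have := adj_side H12; rewrite (adj_side H1) (adj_side H2).
  by case: (side v).
- rewrite E1 in H12; apply: (noC4 (a := v) (b := y2)) => //.
  all: try by rewrite eq_sym.
  by rewrite adjC. by rewrite adjC.
- rewrite E2 in H12; apply: (noC4 (a := v) (b := y1)) => //.
  all: try by rewrite eq_sym.
  by rewrite adjC.
- have := adj_side H12; rewrite (adj_side A1) (adj_side A2) (adj_side H1) (adj_side H2).
  by case: (side v).
Qed.

Lemma touch_uniq E v w1 w2 : is_edge e E -> e v w1 -> e v w2 ->
  touch E w1 v -> touch E w2 v -> w1 = w2.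
Proof.
move=> [a [b [Hab ->]]] H1 H2 /existsP [y1 /andP [Hy1 S1]] /existsP [y2 /andP [Hy2 S2]].
case: (eqVneq y1 y2) => [Ey|Hne].
  by rewrite Ey in S1; apply: (inS_same H1 H2 S1 S2).
move: Hy1 Hy2; rewrite !inE => /orP [] /eqP E1 /orP [] /eqP E2.
- by rewrite E1 E2 eqxx in Hne.
- rewrite E1 E2 in S1 S2; exact: (inS_adj H1 H2 Hab S1 S2).
- rewrite E1 E2 in S1 S2; rewrite adjC in Hab; exact: (inS_adj H1 H2 Hab S1 S2).
- by rewrite E1 E2 eqxx in Hne.
Qed.

Lemma choose_next m (C : 'I_m -> {set V}) v : (forall i, is_edge e (C i)) ->
  m < k * (k - 1) -> exists w, e v w /\ #|[set i | touch (C i) w v]| < k.-1.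
Proof.
move=> Hv Hm.
case: (boolP [exists w, e v w && (#|[set i | touch (C i) w v]| < k.-1)]).
  by case/existsP => w /andP [H1 H2]; exists w.
move/existsPn => Hn; exfalso.
have Hsum : \sum_(w in [set y | e v y]) #|[set i | touch (C i) w v]| <= m.
  under eq_bigr => w _ do rewrite -sum1dep_card big_mkcond /=.
  rewrite exchange_big /=.
  apply: leq_trans (_ : \sum_(i < m) 1 <= m); last by rewrite sum1_card card_ord.
  apply: leq_sum => i _.
  rewrite -big_mkcondr sum1dep_card.
  apply/card_le1_eqP => x y; rewrite !inE => /andP [Hx Tx] /andP [Hy Ty].
  exact: (touch_uniq (Hv i) Hy Hx Ty Tx).
have : k * k.-1 <= m.
  apply: leq_trans Hsum.
  apply: leq_trans (_ : \sum_(w in [set y | e v y]) k.-1 <= _).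
    by rewrite sum_nat_const leq_mul2r deg orbT.
  apply: leq_sum => w; rewrite inE => Hw.
  by have := Hn w; rewrite Hw /= -leqNgt.
by rewrite leqNgt -subn1 Hm.
Qed.

Lemma notwon m (C C' : 'I_m -> {set V}) r u : e r u ->
  #|[set i | touch (C i) r u]| < k.-1 ->
  (forall i, C' i = C i \/ (is_edge e (C' i) /\ exists x, x \in C i /\ x \in C' i)) ->
  ~ (forall y, e r y -> exists i, C' i = [set r; y]).
Proof.
move=> Hu Hc Hmv Hw.
pose f i := odflt r [pick y in C' i | y != r].
have Hsub : [set y | e r y] :\ u \subset f @: [set i | touch (C i) r u].
  apply/subsetP => y; rewrite !inE => /andP [Hyu Hy].
  have Hyr : y != r by apply/eqP => E; rewrite E adj_irr in Hy.
  have [i Hi] := Hw y Hy.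
  apply/imsetP; exists i.
    rewrite inE; case: (Hmv i) => [E|[_ [x [Hx1 Hx2]]]].
      apply/existsP; exists y; rewrite -E Hi !inE eqxx orbT /= /inS Hy Hyu.
      by rewrite orbT.
    apply/existsP; exists x; rewrite Hx1 /= /inS.
    move: Hx2; rewrite Hi !inE => /orP [->//|/eqP ->].
    by rewrite Hy Hyu orbT.
  rewrite /f; case: pickP => [y' /andP [Hy'1 Hy'2]|H0] /=.
    by move: Hy'1; rewrite Hi !inE (negbTE Hy'2) => /eqP.
  by move: (H0 y); rewrite Hi !inE eqxx orbT Hyr.
have := subset_leq_card Hsub.
have := leq_imset_card f [set i | touch (C i) r u].
move: (cardsD1 u [set y | e r y]); rewrite inE Hu add1n => Hcd.
have := deg r; rewrite Hcd => Hdeg H1 H2.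
have H3 : #|[set y | e r y] :\ u| <= #|[set i | touch (C i) r u]|.
  apply: leq_trans H2 _. exact: H1.
move: H3; rewrite leqNgt.
case/negP. apply: (leq_trans Hc). move: Hdeg.
by move=> Hd; rewrite -ltnS (prednK k0).
Qed.

Lemma edge_lower m : m < k * (k - 1) -> ~ edge_win e m.
Proof.
move=> Hm [C0 [Hv Hwin]].
have [w [Hw Hc]] := choose_next (inr (inl i0)) Hv Hm.
apply: (no_force (Inv := fun C r => (forall i, is_edge e (C i)) /\
     exists u, e r u /\ #|[set i | touch (C i) r u]| < k.-1)) (Hwin w I) _.
- move=> C r [_ [u [Hu Hcu]]]; apply: (notwon Hu Hcu) => i; by left.
- move=> C r C' [HvC [u [Hu Hcu]]] Hmv; split; first exact: (notwon Hu Hcu Hmv).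
  have HvC' : forall i, is_edge e (C' i).
    by move=> i; case: (Hmv i) => [->|[]].
  have [w' [Hw' Hc']] := choose_next r HvC' Hm.
  exists w'; split; first by right.
  by split => //; exists r; rewrite adjC Hw'.
- split => //; exists (inr (inl i0)); by rewrite adjC Hw.
Qed.

End G.

Unset Implicit Arguments.

Theorem lemma3 (k : nat) (Ls : 'I_k.-1 -> 'I_k -> 'I_k -> 'I_k) :
  prime_power k ->
  (forall s, latin (Ls s)) ->
  (forall s t, s != t -> orthogonal (Ls s) (Ls t)) ->
  copnum_eq (classical_win (Gadj Ls)) k /\
  copnum_le (restrictive_win (Gadj Ls)) k.+1 /\
  copnum_ge (edge_win (Gadj Ls)) (k * (k - 1)).
Proof.
move=> [p [n [Pp [n0 Ek]]]] Hlat Horth.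
have Hk : 1 < k.
  by rewrite Ek (_ : 1 = p ^ 0) // ltn_exp2l // prime_gt1.
split; [split|split].
- exact: classical_upper.
- move=> m Hm; exact: classical_lower.
- by exists k.+1; split => //; apply: restrictive_upper.
- move=> m Hm; exact: edge_lower.
Qed.
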